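(* Let $n\ge1$, $X=\{1,\dots,n\}$, $\mathcal{A}$ the algebra of all functions $X\to\mathbb{R}$ with pointwise operations, $\sigma:X\to X$ a bijection and $\tilde{\sigma}(f)=f\circ\sigma^{-1}$. The centralizer of $\mathcal{A}$ in the skew power series ring $\mathcal{A}[[x;\tilde{\sigma}]]$ is $$C(\mathcal{A})=\Big\{\sum_{n=0}^{\infty} f_nx^n : f_n\in\mathcal{A},\ f_n=0\text{ on } Sep^n(X)\text{ for all } n\ge0\Big\}.$$
   Context: The skew power series ring $\mathcal{A}[[x;\tilde{\sigma}]]$ is the set of formal series $\sum_{n=0}^\infty f_nx^n$, $f_n\in\mathcal{A}$, with coefficientwise addition and multiplication $\big(\sum_n f_nx^n\big)\big(\sum_n g_nx^n\big)=\sum_{n}\big(\sum_{k=0}^n f_k\,\tilde{\sigma}^k(g_{n-k})\big)x^n$ (so $xf=\tilde{\sigma}(f)x$). For an integer $n$, $Sep^n(X)=\{p\in X:\sigma^n(p)\neq p\}$ (so $Sep^0(X)=\emptyset$). *)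

(* Defs.v *)
From mathcomp Require Import all_boot all_order all_fingroup all_algebra.
From mathcomp Require Import reals.
Set Implicit Arguments. Unset Strict Implicit. Unset Printing Implicit Defensive.
Import GRing.Theory Num.Theory.
Local Open Scope ring_scope.

Definition sigma_tilde (R : realType) (n : nat) (s : {perm 'I_n})
  (f : 'I_n -> R) : 'I_n -> R := fun p => f ((s^-1)%g p).

(* formal skew power series sum_k F k x^k, F k in A *)
Definition skew_series (R : realType) (n : nat) := nat -> 'I_n -> R.

(* (sum f_k x^k)(sum g_k x^k) = sum_k (sum_{i<=k} f_i * st^i(g_{k-i})) x^k *)
Definition skew_mul (R : realType) (n : nat) (s : {perm 'I_n})
  (F G : skew_series R n) : skew_series R n :=
  fun k p => \sum_(i < k.+1) F i p * iter i (sigma_tilde s) (G (k - i)%N) p.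

Definition const_series (R : realType) (n : nat) (a : 'I_n -> R)
  : skew_series R n := fun k => if k == 0%N then a else (fun _ => 0).

Definition in_centralizer (R : realType) (n : nat) (s : {perm 'I_n})
  (F : skew_series R n) : Prop :=
  forall a : 'I_n -> R,
    skew_mul s F (const_series a) = skew_mul s (const_series a) F.

Definition Sep (n : nat) (s : {perm 'I_n}) (k : nat) : {set 'I_n} :=
  [set p | (s ^+ k)%g p != p].

(* Main.v *)
Require Import Defs.
From mathcomp Require Import all_boot all_order all_fingroup all_algebra.
From mathcomp Require Import reals.
From Stdlib Require Import FunctionalExtensionality.
Notation funext := functional_extensionality.
Local Open Scope ring_scope.
Import GRing.Theory.

Lemma iter_st (R : realType) (n : nat) (s : {perm 'I_n}) k (a : 'I_n -> R) :
  iter k (sigma_tilde s) a = fun p => a (((s^-1) ^+ k)%g p).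
Proof.
elim: k => [|k IH] /=; first by apply: funext => p; rewrite expg0 perm1.
rewrite IH /sigma_tilde; apply: funext => p; by rewrite expgS permM.
Qed.

Lemma mulL (R : realType) (n : nat) (s : {perm 'I_n}) F a k p :
  skew_mul s F (const_series (R:=R) a) k p = F k p * a (((s^-1) ^+ k)%g p).
Proof.
rewrite /skew_mul big_ord_recr /= subnn /const_series eqxx iter_st big1 ?add0r //.
move=> i _; have : (k - i)%N != 0%N by rewrite subn_eq0 -ltnNge.
by move/negbTE => ->; rewrite iter_st mulr0.
Qed.

Lemma mulR (R : realType) (n : nat) (s : {perm 'I_n}) F a k p :
  skew_mul s (const_series (R:=R) a) F k p = a p * F k p.
Proof.
rewrite /skew_mul big_ord_recl /= subn0 big1 ?addr0 //.
by move=> i _; rewrite /const_series /= mul0r.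
Qed.

Lemma fixE (n : nat) (s : {perm 'I_n}) k p :
  (((s^-1) ^+ k)%g p == p) = ((s ^+ k)%g p == p).
Proof.
rewrite expgVn; apply/eqP/eqP => H.
- by rewrite -{1}H permKV.
- by rewrite -{1}H permK.
Qed.

Theorem theorem10 (R : realType) (n : nat) (hn : (1 <= n)%N)
  (s : {perm 'I_n}) (F : skew_series R n) :
  in_centralizer s F <->
  (forall (k : nat) (p : 'I_n), p \in Sep s k -> F k p = 0).
Proof.
split.
- move=> H k p; rewrite /Sep inE -fixE => Hp.
  have := congr1 (fun G => G k p) (H (fun q => if q == p then 1 else 0)).
  rewrite /= mulL mulR eqxx (negbTE Hp) mulr0 mul1r => E.
  by rewrite -E.
- move=> H a; apply: funext => k; apply: funext => p.
  rewrite mulL mulR.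
  case: (boolP (p \in Sep s k)) => Hp; first by rewrite H // mulr0 mul0r.
  move: Hp; rewrite /Sep inE negbK -fixE => /eqP ->.
  by rewrite mulrC.
Qed.
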